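(* Let $G$ be a finite-rank splitter which is $p$-reduced for every prime $p$, and let $0\neq U$ be a pure subgroup of $G$. Then $\mathrm{nuc}\,U=\mathrm{nuc}\,G$.
   Context: For a torsion-free abelian group $G\neq0$, $\mathrm{nuc}\,G$ is the largest subring $R$ of $\mathbb{Q}$ such that $G$ is an $R$-module. A torsion-free $R$-module $G$ over its nucleus $R$ is a finite-rank splitter if $\mathrm{Ext}(G',G)=0$ for all finite-rank $R$-submodules $G'$ of $G$. $G$ is $p$-reduced if $\bigcap_{k\in\omega}p^kG=0$. A subgroup $U\subseteq G$ is pure if $G/U$ is torsion-free. *)

(* Defs.v *)
From HB Require Import structures.
From mathcomp Require Import all_boot all_order all_algebra.
Set Implicit Arguments. Unset Strict Implicit. Unset Printing Implicit Defensive.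
Import GRing.Theory Num.Theory.
Local Open Scope ring_scope.

Definition subring_Q (S : rat -> Prop) : Prop :=
  [/\ S 1, forall r s, S r -> S s -> S (r - s) & forall r s, S r -> S s -> S (r * s)].

Definition subgroup (G : zmodType) (P : G -> Prop) : Prop :=
  [/\ P 0, forall x y, P x -> P y -> P (x + y) & forall x, P x -> P (- x)].

Definition torsion_free (G : zmodType) : Prop :=
  forall (n : nat) (x : G), (0 < n)%N -> x *+ n = 0 -> x = 0.

Definition module_over (G : zmodType) (P : G -> Prop) (S : rat -> Prop)
  (act : rat -> G -> G) : Prop :=
  [/\ forall r x, S r -> P x -> P (act r x),
      forall x, P x -> act 1 x = x,
      forall r s x, S r -> S s -> P x -> act (r * s) x = act r (act s x),
      forall r s x, S r -> S s -> P x -> act (r + s) x = act r x + act s x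
    & forall r x y, S r -> P x -> P y -> act r (x + y) = act r x + act r y].

(* nuc P : the largest subring of Q over which P is a module, realised as the
   union of all subrings S of Q such that P admits an S-module structure *)
Definition nuc (G : zmodType) (P : G -> Prop) (q : rat) : Prop :=
  exists (S : rat -> Prop) (act : rat -> G -> G),
    [/\ subring_Q S, S q & module_over P S act].

Definition fullset (G : zmodType) : G -> Prop := fun _ => True.

(* P is an R-submodule of G, R = nuc G: closed under every action of a
   subring of Q on G (these actions realise the nuc G-module structure) *)
Definition nuc_submodule (G : zmodType) (P : G -> Prop) : Prop :=
  subgroup P /\
  forall (S : rat -> Prop) (act : rat -> G -> G),
    subring_Q S -> module_over (@fullset G) S act ->
    forall r x, S r -> P x -> P (act r x).

(* finite (torsion-free) rank: P is contained in the divisible hull of the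
   subgroup generated by finitely many elements of P *)
Definition finite_rank (G : zmodType) (P : G -> Prop) : Prop :=
  exists s : seq G, (forall i, (i < size s)%N -> P (nth 0 s i)) /\
    forall x, P x -> exists (n : nat) (c : nat -> int),
      (0 < n)%N /\ x *+ n = \sum_(i < size s) (nth 0 s i) *~ c i.

(* Ext(P, G) = 0 : every extension 0 -> G -i-> X -pi-> P -> 0 of abelian
   groups splits (pi : X -> G with image exactly P, kernel = image of i). *)
Definition Ext_zero (G : zmodType) (P : G -> Prop) : Prop :=
  forall (X : zmodType) (i : {additive G -> X}) (pi : {additive X -> G}),
    injective i ->
    (forall y, P y <-> exists x, pi x = y) ->
    (forall x, pi x = 0 <-> exists g, i g = x) ->
    exists sigma : G -> X,
      (forall a b, P a -> P b -> sigma (a + b) = sigma a + sigma b) /\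
      (forall a, P a -> pi (sigma a) = a).

Definition finite_rank_splitter (G : zmodType) : Prop :=
  forall P : G -> Prop, nuc_submodule P -> finite_rank P -> Ext_zero P.

Definition p_reduced (G : zmodType) (p : nat) : Prop :=
  forall x : G, (forall k : nat, exists y : G, x = y *+ (p ^ k)) -> x = 0.

(* pure subgroup: G/U torsion-free *)
Definition pure (G : zmodType) (U : G -> Prop) : Prop :=
  subgroup U /\ forall (n : nat) (x : G), (0 < n)%N -> U (x *+ n) -> U x.

(* Main.v *)
Require Import Defs.
From mathcomp Require Import all_boot all_order all_algebra.
Import GRing.Theory Num.Theory.
Local Open Scope ring_scope.

Section A.
Variables (S : rat -> Prop).
Hypothesis hS : subring_Q S.

Lemma S0 : S 0.
Proof. case: hS => h1 hB _; by rewrite -(subrr 1); apply: hB. Qed.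
Lemma SN r : S r -> S (- r).
Proof. case: hS => h1 hB _ hr; rewrite -sub0r; apply: hB => //; exact: S0. Qed.
Lemma SD r s : S r -> S s -> S (r + s).
Proof. case: hS => h1 hB _ hr hs; rewrite -[s]opprK; apply: hB => //; exact: SN. Qed.
Lemma Snat (n : nat) : S n%:R.
Proof. elim: n => [|n IH]; first exact: S0. rewrite -natr1; apply: SD => //; by case: hS. Qed.
Lemma Sint (m : int) : S m%:~R.
Proof. case: m => n; first exact: Snat. rewrite NegzE mulrNz; apply: SN; exact: Snat. Qed.
End A.

Section B.
Variables (G : zmodType) (P : G -> Prop) (S : rat -> Prop) (act : rat -> G -> G).
Hypothesis hS : subring_Q S.
Hypothesis hM : module_over P S act.

Lemma act0 y : P y -> act 0 y = 0.
Proof.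
case: hM => _ _ _ hD _ Py.
have h := hD 0 0 y (@S0 S hS) (@S0 S hS) Py; rewrite addr0 in h.
by rewrite -(addrK (act 0 y) (act 0 y)) -h subrr.
Qed.

Lemma actn (n : nat) y : P y -> act n%:R y = y *+ n.
Proof.
move=> Py; elim: n => [|n IH]; first by rewrite act0.
case: hM => _ h1 _ hD _.
rewrite -natr1 hD //; [|exact: (@Snat S hS)|by case: hS].
by rewrite IH h1 // mulrSr.
Qed.

Lemma act_div (n : nat) y : (0 < n)%N -> S n%:R^-1 -> P y ->
  P (act n%:R^-1 y) /\ y = act n%:R^-1 y *+ n.
Proof.
move=> n0 Sn Py; case: hM => hP h1 hMul _ _; split; first exact: hP.
rewrite -actn; last exact: hP.
by rewrite -hMul ?divff ?h1 // ?pnatr_eq0 -?lt0n //; exact: (@Snat S hS).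
Qed.
End B.
From mathcomp Require Import ring.

Lemma nuc_int (G : zmodType) (P : G -> Prop) q x :
  (forall p : nat, prime p -> p_reduced G p) -> P x -> x != 0 -> nuc P q ->
  denq q = 1.
Proof.
move=> hred Px x0 [S [act [hS Sq hM]]].
have [D hD] : exists D : nat, denq q = D%:Z.
  by exists `|denq q|%N; rewrite abszE gtr0_norm // denq_gt0.
have D0 : (0 < D)%N by rewrite -ltz_nat -hD denq_gt0.
have [u [v huv]] := Bezoutz (numq q) (denq q).
have g1 : gcdz (numq q) (denq q) = 1.
  by rewrite /gcdz (eqP (coprime_num_den q)).
rewrite g1 hD in huv.
have huvQ : u%:~R * (numq q)%:~R + v%:~R * D%:R = 1 :> rat.
  by rewrite -intrM -[X in _ + X](intrM _ v D) -intrD huv.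
have SD : S D%:R^-1.
  have -> : (D%:R^-1 : rat) = u%:~R * q + v%:~R.
    rewrite -(divq_num_den q) hD.
    have Dn0 : (D%:R : rat) != 0 by rewrite pnatr_eq0 -lt0n.
    set a := (u%:~R : rat); set b := (v%:~R : rat); set c := ((numq q)%:~R : rat); set e := (D%:R : rat).
    have -> : a * (c / e) + b = (a * c + b * e) / e by field.
    by rewrite huvQ mul1r.
  have hMul := hS; case: hMul => _ _ hMul.
  apply: (@SD S hS); [apply: hMul => //; exact: (@Sint S hS)|exact: (@Sint S hS)].
have hk : forall k, exists z, P z /\ x = z *+ (D ^ k).
  elim=> [|k [z [Pz ->]]]; first by exists x.
  have [Pz' hz] := @act_div G P S act hS hM D z D0 SD Pz.
  exists (act D%:R^-1 z); split => //.
  by rewrite {1}hz expnS mulrnA.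
apply/eqP; apply/negPn/negP => Dn1.
have D1 : (1 < D)%N by move: Dn1; rewrite hD; case: D D0 {huv huvQ SD hk hD} => [|[|D]].
have pp := pdiv_prime D1.
case/negP: x0; apply/eqP; apply: (hred _ pp) => k.
have [z [_ ->]] := hk k.
exists (z *+ (D %/ pdiv D) ^ k).
by rewrite -mulrnA -expnMn divnK // pdiv_dvd.
Qed.

Lemma sub_mulz (G : zmodType) (P : G -> Prop) x (m : int) :
  subgroup P -> P x -> P (x *~ m).
Proof.
case=> P0 PD PN Px.
have hn : forall n : nat, P (x *+ n).
  by elim=> [|n IH] //; rewrite mulrSr; apply: PD.
by case: m => n; [exact: hn | rewrite NegzE mulrNz; apply: PN; apply: hn].
Qed.

Lemma int_nuc (G : zmodType) (P : G -> Prop) q :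
  subgroup P -> denq q = 1 -> nuc P q.
Proof.
move=> sP dq.
exists (fun r : rat => r \is a Num.int), (fun r x => x *~ Num.floor r).
have fl : forall r : rat, r \is a Num.int -> r = (Num.floor r)%:~R.
  by move=> r; rewrite intrEfloor => /eqP ->.
split.
- split; [exact: rpred1| exact: rpredB | exact: rpredM].
- by rewrite Qint_def dq.
split.
- by move=> r x _ Px; apply: sub_mulz.
- by move=> x _; rewrite -[1]/(1%:~R : rat) intrKfloor.
- move=> r s x hr hs _; rewrite (fl r hr) (fl s hs) -intrM !intrKfloor.
  by rewrite mulrC mulrzA.
- move=> r s x hr hs _; rewrite (fl r hr) (fl s hs) -intrD !intrKfloor.
  by rewrite mulrzDr.
- by move=> r x y _ _ _; rewrite mulrzDl.
Qed.

Theorem corollary4p4 (G : zmodType) (U : G -> Prop) :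
  torsion_free G ->
  (exists x : G, x != 0) ->
  finite_rank_splitter G ->
  (forall p : nat, prime p -> p_reduced G p) ->
  pure U ->
  (exists x : G, U x /\ x != 0) ->
  forall q : rat, nuc U q <-> nuc (@fullset G) q.
Proof.
move=> _ _ _ hred [sU _] [x [Ux x0]] q; split => h.
- apply: int_nuc; first by split.
  exact: nuc_int hred Ux x0 h.
- apply: int_nuc => //.
  by apply: (@nuc_int G (@fullset G) q x hred).
Qed.
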